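(* Let $N\ge1$, $\eta_S,\eta_{FS}\in\mathbb{R}$ and $q\in(0,1)$. For $\eta_F\in\mathbb{R}$, let $(X_1,\dots,X_N)\in\{0,1\}^N$ have distribution $$\Pr(X_1=x_1,\dots,X_N=x_N)=\frac{1}{Z_1}\Big(e^{\eta_F\sum_ix_i}+e^{\eta_S+(\eta_{FS}+\eta_F)\sum_ix_i}\Big),\qquad Z_1=(1+e^{\eta_F})^N+e^{\eta_S}(1+e^{\eta_F+\eta_{FS}})^N.$$ Define $g(y)=\big(1-\frac{1-q}{q}y\big)(1+y)^{N-1}$. Then a value $\eta_F^*\in\mathbb{R}$ gives $\Pr(X_1=1)=q$ if and only if $$g\big(e^{\eta_F^*}\big)+e^{\eta_S}\,g\big(e^{\eta_{FS}}e^{\eta_F^*}\big)=0.$$ *)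

(* Defs.v *)
From HB Require Import structures.
From mathcomp Require Import all_boot all_order all_algebra.
From mathcomp Require Import all_classical all_reals all_analysis.
Set Implicit Arguments. Unset Strict Implicit. Unset Printing Implicit Defensive.
Import Order.TTheory GRing.Theory Num.Theory.
Local Open Scope ring_scope.

Definition nones (N : nat) (R : realType) (x : {ffun 'I_N -> bool}) : R :=
  \sum_(i < N) (x i)%:R.

Definition weight (R : realType) (N : nat) (etaS etaFS etaF : R)
  (x : {ffun 'I_N -> bool}) : R :=
  expR (etaF * nones R x) + expR (etaS + (etaFS + etaF) * nones R x).

Definition Z1 (R : realType) (N : nat) (etaS etaFS etaF : R) : R :=
  (1 + expR etaF) ^+ N + expR etaS * (1 + expR (etaF + etaFS)) ^+ N.

Definition prob (R : realType) (N : nat) (etaS etaFS etaF : R)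
  (x : {ffun 'I_N -> bool}) : R :=
  weight etaS etaFS etaF x / Z1 N etaS etaFS etaF.

(* Pr(X_1 = 1); the first coordinate is the index 0 (needs 1 <= N) *)
Definition probX1 (R : realType) (N : nat) (hN : (0 < N)%N) (etaS etaFS etaF : R) : R :=
  \sum_(x : {ffun 'I_N -> bool} | x (Ordinal hN)) prob etaS etaFS etaF x.

Definition g (R : realType) (N : nat) (q y : R) : R :=
  (1 - (1 - q) / q * y) * (1 + y) ^+ N.-1.

(* Main.v *)
Require Import Defs.
From mathcomp Require Import all_boot all_order all_algebra.
From mathcomp Require Import all_classical all_reals all_analysis.
From mathcomp Require Import ring lra.
Import Order.TTheory GRing.Theory Num.Theory.
Local Open Scope ring_scope.

Lemma expR_nones (R : realType) (N : nat) (a : R) (x : {ffun 'I_N -> bool}) :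
  expR (a * nones R x) = \prod_(i < N) (if x i then expR a else 1).
Proof.
rewrite /nones mulr_sumr (big_morph expR (@expRD R) (expR0 R)).
by apply: eq_bigr => i _; case: (x i); rewrite ?mulr1 ?mulr0 ?expR0.
Qed.

Lemma sum_first (R : realType) (N : nat) (i0 : 'I_N) (a : R) :
  \sum_(x : {ffun 'I_N -> bool} | x i0) expR (a * nones R x)
  = expR a * (1 + expR a) ^+ N.-1.
Proof.
set e := expR a.
pose F := fun (i : 'I_N) (b : bool) =>
  if i == i0 then (if b then e else 0) else (if b then e else 1).
have H := @bigA_distr_bigA R 0 1 *%R +%R _ _ F.
transitivity (\sum_(f : {ffun 'I_N -> bool}) \prod_(i < N) F i (f i)).
  rewrite [RHS](bigID (fun f : {ffun 'I_N -> bool} => f i0)) /=.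
  rewrite [X in _ + X]big1 ?addr0; last first.
    move=> f /negbTE f0; rewrite (bigD1 i0) //= /F eqxx f0 mul0r //.
  apply: eq_bigr => f f0; rewrite expR_nones; apply: eq_bigr => i _.
  by rewrite /F; case: eqP => // ->; rewrite f0.
rewrite -H (bigD1 i0) //= big_bool /= /F eqxx /= addr0.
congr (_ * _).
have -> : \prod_(i < N | i != i0) \sum_(j : bool) (if i == i0 then (if j then e else 0) else (if j then e else 1))
   = \prod_(i < N | i != i0) (1 + e).
  by apply: eq_bigr => i /negbTE ->; rewrite big_bool /= addrC.
rewrite prodr_const; congr (_ ^+ _).
by rewrite cardC1 card_ord.
Qed.

Lemma sum_all (R : realType) (N : nat) (a : R) :
  \sum_(x : {ffun 'I_N -> bool}) expR (a * nones R x) = (1 + expR a) ^+ N.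
Proof.
set e := expR a.
pose F := fun (i : 'I_N) (b : bool) => if b then e else 1.
have H := @bigA_distr_bigA R 0 1 *%R +%R _ _ F.
transitivity (\sum_(f : {ffun 'I_N -> bool}) \prod_(i < N) F i (f i)).
  by apply: eq_bigr => f _; rewrite expR_nones.
rewrite -H.
rewrite (eq_bigr (fun _ => 1 + e)); last by move=> i _; rewrite big_bool /= addrC.
by rewrite prodr_const card_ord.
Qed.

Theorem proposition5 (R : realType) (N : nat) (hN : (0 < N)%N)
  (etaS etaFS q : R) (hq0 : 0 < q) (hq1 : q < 1) (etaFstar : R) :
  probX1 hN etaS etaFS etaFstar = q <->
  g N q (expR etaFstar) + expR etaS * g N q (expR etaFS * expR etaFstar) = 0.
Proof.
rewrite /probX1 /prob -mulr_suml /weight big_split /=.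
under [X in _ + X]eq_bigr do rewrite expRD.
rewrite -mulr_sumr !sum_first /Z1 /g.
rewrite [expR (etaFstar + etaFS)]expRD [expR etaFstar * expR etaFS]mulrC.
rewrite [expR (etaFS + etaFstar)]expRD.
set y := expR etaFstar.
set w := expR etaFS * y.
set s := expR etaS.
case: N hN => // n _ /=.
have y0 : 0 < y by rewrite expR_gt0.
have w0 : 0 < w by rewrite mulr_gt0 ?expR_gt0.
have s0 : 0 < s by rewrite expR_gt0.
set A := (1 + y) ^+ n. set B := (1 + w) ^+ n.
have A0 : 0 < A by rewrite exprn_gt0 // ltr_wpDr // ltW.
have B0 : 0 < B by rewrite exprn_gt0 // ltr_wpDr // ltW.
have Z0 : 0 < A * (1 + y) + s * (B * (1 + w)).
  by rewrite addr_gt0 ?mulr_gt0 // ltr_wpDr // ltW.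
rewrite !exprSr -/A -/B.
have qn : q != 0 by rewrite gt_eqF.
have Zn : A * (1 + y) + s * (B * (1 + w)) != 0 by rewrite gt_eqF.
have hc : q * ((1 - q) / q) = 1 - q by rewrite mulrCA mulfV // mulr1.
set c := (1 - q) / q in hc *.
clearbody A B w y s c.
have key : q * ((1 - c * y) * A + s * ((1 - c * w) * B))
   = q * (A * (1 + y) + s * (B * (1 + w))) - (y * A + s * (w * B)).
  transitivity (q * A - (q * c) * (y * A) + s * (q * B - (q * c) * (w * B))).
    by ring.
  rewrite hc; ring.
split.
  move=> E.
  have E2 : y * A + s * (w * B) = q * (A * (1 + y) + s * (B * (1 + w))) by rewrite -E divfK.
  apply: (mulfI qn); rewrite mulr0 key E2 subrr //.
move=> E.
apply: (mulIf Zn); rewrite divfK //.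
apply/esym/eqP; rewrite -subr_eq0; apply/eqP; rewrite -key E mulr0 //.
Qed.
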